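(* Let $n\geq 3$ and let $L^B$ be a blow-up of the Boolean lattice $L\cong \mathbf{2}^n$. Then \[ \operatorname{sdim}_M\bigl(G^c(L^B)\bigr)=|Z^*(L^B)|-2^{n-1}+1 . \]
   Context: Blow-up: let $L\cong\mathbf{2}^n$ be the Boolean lattice (subsets of $\{1,\dots,n\}$). The blow-up $L^B$ is the lattice obtained by keeping $0$ and $1$ and replacing every element $x\in L\setminus\{0,1\}$ by a finite nonempty chain $C_x$ (of arbitrary finite length, chosen independently for each $x$), ordered as follows: within $C_x$ the chain order; for $a\in C_x$, $b\in C_y$ with $x\neq y$, $a\leq b$ iff $x\leq y$ in $L$; $0$ is below and $1$ above everything. For a bounded lattice $M$ with $0$, $Z^*(M)=\{a\in M\setminus\{0\}:\ a\wedge b=0 \text{ for some } b\neq 0\}$. The graph $G^c(M)$ (complement of the zero-divisor graph) has vertex set $Z^*(M)$, two distinct vertices $a,b$ being adjacent iff $a\wedge b\neq 0$. For a connected graph $G$, a vertex $w$ strongly resolves $u,v$ if some shortest $u$–$w$ path contains $v$ or some shortest $v$–$w$ path contains $u$; a set $W$ of vertices is a strong resolving set if every pair of distinct vertices is strongly resolved by some vertex of $W$; $\operatorname{sdim}_M(G)$ is the minimum cardinality of a strong resolving set. *)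

(* Defs.v *)
From mathcomp Require Import all_boot.
Set Implicit Arguments.
Unset Strict Implicit.
Unset Printing Implicit Defensive.

Section Graph.
Variables (V : finType) (Vs : {set V}) (adj : rel V).

Definition gwalk (u : V) (p : seq V) (w : V) : Prop :=
  [/\ path adj u p, last u p = w & all (fun x => x \in Vs) (u :: p)].

Definition gshortest (u : V) (p : seq V) (w : V) : Prop :=
  gwalk u p w /\ forall q, gwalk u q w -> size p <= size q.

Definition strongly_resolves (w u v : V) : Prop :=
  (exists p, gshortest u p w /\ v \in u :: p) \/
  (exists p, gshortest v p w /\ u \in v :: p).

Definition strong_resolving_set (W : {set V}) : Prop :=
  W \subset Vs /\
  forall u v, u \in Vs -> v \in Vs -> u != v ->
    exists2 w, w \in W & strongly_resolves w u v.

Definition is_sdim (N : nat) : Prop :=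
  (exists W, strong_resolving_set W /\ #|W| = N) /\
  (forall W, strong_resolving_set W -> N <= #|W|).
End Graph.

(* k x = length of the chain C_x replacing x (for x proper nonempty) *)
Definition kbound (n : nat) (k : {set 'I_n} -> nat) : nat :=
  \max_(x : {set 'I_n}) k x.

(* carrier: None = 0, Some None = 1, Some (Some (x, i)) = i-th element of C_x *)
Definition BElt (n : nat) (k : {set 'I_n} -> nat) : finType :=
  option (option ({set 'I_n} * 'I_(kbound k))).

Section BlowUp.
Variables (n : nat) (k : {set 'I_n} -> nat).
Local Notation E := (BElt k).

Definition bot : E := None.
Definition top : E := Some None.

(* elements actually belonging to L^B *)
Definition LB : {set E} :=
  [set a : E | match a with
               | Some (Some (x, i)) => [&& x != set0, x != setT & (i : nat) < k x]
               | _ => true end].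

Definition ble (a b : E) : bool :=
  match a, b with
  | None, _ => true
  | _, Some None => true
  | Some None, _ => false
  | Some (Some _), None => false
  | Some (Some (x, i)), Some (Some (y, j)) =>
      if x == y then (i <= j)%N else x \proper y
  end.

Definition meet0 (a b : E) : bool :=
  [forall c in LB, (ble c a && ble c b) ==> (c == bot)].

Definition Zstar : {set E} :=
  [set a in LB | (a != bot) && [exists b in LB, (b != bot) && meet0 a b]].

Definition Gc_adj : rel E := fun a b => (a != b) && ~~ meet0 a b.
End BlowUp.

(* Main.v *)
Require Import Defs.
From mathcomp Require Import all_boot.
From mathcomp Require Import zify.
Set Implicit Arguments. Unset Strict Implicit. Unset Printing Implicit Defensive.

Section S.
Variables (n : nat) (k : {set 'I_n} -> nat).
Hypothesis Hn : 3 <= n.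
Hypothesis Hk : forall x : {set 'I_n}, x != set0 -> x != setT -> 0 < k x.
Local Notation E := (BElt k).

Definition sx (a : E) : {set 'I_n} :=
  match a with Some (Some (x, _)) => x | _ => set0 end.

Lemma ble_refl (a : E) : ble a a.
Proof. by case: a => [[[x i]|]|] //=; rewrite eqxx. Qed.

Lemma bleS (z : {set 'I_n}) l (a : E) : ble (Some (Some (z, l)) : E) a ->
   a != top k -> z \subset sx a.
Proof.
case: a => [[[w m]|]|] //= H _.
by move: H; case: eqP => [->|_ /proper_sub].
Qed.

Lemma meet0C x (i : 'I_(kbound k)) y (j : 'I_(kbound k)) :
  x != setT -> y != setT -> i < k x -> j < k y ->
  meet0 (Some (Some (x, i)) : E) (Some (Some (y, j))) = (x :&: y == set0).
Proof.
move=> xT yT ik jk.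
have k0 : 0 < kbound k by apply: leq_ltn_trans (ltn_ord i).
apply/idP/idP.
- move=> /forallP H; apply/negPn/negP => nz.
  suff [c [cL cb c1 c2]] : exists c : E, [/\ c \in LB k, c != bot k,
     ble c (Some (Some (x, i))) & ble c (Some (Some (y, j)))].
    by move: (H c); rewrite cL c1 c2 (negbTE cb).
  have x0 : x != set0 by apply: contraNneq nz => ->; rewrite set0I.
  have y0 : y != set0 by apply: contraNneq nz => ->; rewrite setI0.
  have [exy|nxy] := eqVneq x y.
  - subst y. case: (leqP i j) => ij.
    + exists (Some (Some (x, i))); rewrite /= eqxx ij; split => //.
      by rewrite inE x0 xT.
    + exists (Some (Some (x, j))); rewrite /= eqxx (ltnW ij) leqnn; split => //.
      by rewrite inE x0 xT.
  have [sxy|nsxy] := boolP (x \subset y).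
    exists (Some (Some (x, i))); rewrite /= eqxx leqnn (negbTE nxy) properEneq nxy sxy.
    by split => //; rewrite inE x0 xT.
  have [syx|nsyx] := boolP (y \subset x).
    exists (Some (Some (y, j))); rewrite /= eqxx leqnn eq_sym (negbTE nxy) properEneq eq_sym nxy syx.
    by split => //; rewrite inE y0 yT.
  have p1 := properIl nsxy; have p2 := properIr nsyx.
  have zT : x :&: y != setT.
    by apply: contraNneq xT => e; rewrite eqEsubset subsetT -e subsetIl.
  exists (Some (Some (x :&: y, Ordinal k0))); rewrite /= (negbTE (proper_neq p1)) (negbTE (proper_neq p2)) p1 p2.
  by split => //; rewrite inE nz zT /= Hk.
- move=> /eqP xy0; apply/forallP => c; apply/implyP => cL; apply/implyP.
  case: c cL => [[[z l]|]|] //= /[!inE] /and3P [z0 _ _] /andP [H1 H2].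
  have sub w (b : bool) : (if z == w then b else z \proper w) -> z \subset w.
    by case: eqP => [->|_ /proper_sub].
  have s1 := sub _ _ H1; have s2 := sub _ _ H2.
  have : z \subset x :&: y by rewrite subsetI s1 s2.
  by rewrite xy0 subset0 (negbTE z0).
Qed.

Lemma n0 : 0 < n. Proof. by apply: leq_trans Hn. Qed.

Lemma small_proper (x : {set 'I_n}) : #|x| < n -> x != setT.
Proof. by apply: contraTneq => ->; rewrite cardsT card_ord ltnn. Qed.

Lemma kpos : 0 < kbound k.
Proof.
pose i0 : 'I_n := Ordinal n0.
rewrite /kbound; apply: leq_trans (leq_bigmax [set i0]).
apply: Hk; first by apply/set0Pn; exists i0; rewrite inE.
by apply: small_proper; rewrite cards1; apply: leq_trans Hn.
Qed.

Definition o0 : 'I_(kbound k) := Ordinal kpos.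
Definition v0 (x : {set 'I_n}) : E := Some (Some (x, o0)).

Lemma v0_inj : injective v0.
Proof. by move=> x y [->]. Qed.

Lemma sx_v0 x : sx (v0 x) = x. Proof. by []. Qed.

Lemma inZ (a : E) : a \in Zstar k -> exists x i, a = Some (Some (x,i)) /\
   [&& x != set0, x != setT & i < k x].
Proof.
rewrite inE => /andP [aL /andP [ab /existsP [b /andP [bL /andP [bb mb]]]]].
case: a aL ab mb => [[[x i]|]|] //.
  by rewrite inE => H _ _; exists x, i.
move=> _ _ /forallP /(_ b); rewrite bL ble_refl /=.
by case: b bL bb => [[[y j]|]|] //= _ /negbTE ->.
Qed.

Lemma Zin x (i : 'I_(kbound k)) : x != set0 -> x != setT -> i < k x ->
  (Some (Some (x,i)) : E) \in Zstar k.
Proof.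
move=> x0 xT ik.
have c0 : ~: x != set0 by apply: contraNneq xT => e; rewrite -(setCK x) e setC0.
have cT : ~: x != setT by apply: contraNneq x0 => e; rewrite -(setCK x) e setCT.
rewrite !inE x0 xT ik /=; apply/existsP; exists (v0 (~: x)).
by rewrite /v0 /= inE c0 cT /= Hk // meet0C // ?Hk // setICr eqxx.

Qed.

Lemma v0Z x : x != set0 -> x != setT -> v0 x \in Zstar k.
Proof. by move=> x0 xT; apply: Zin => //; apply: Hk. Qed.

Lemma Zsx a : a \in Zstar k -> (sx a != set0) && (sx a != setT).
Proof. by case/inZ => x [i [-> /and3P [-> -> _]]]. Qed.

Lemma Zadj a b : a \in Zstar k -> b \in Zstar k ->
  Gc_adj a b = (a != b) && (sx a :&: sx b != set0).
Proof.
case/inZ => x [i [-> /and3P [_ xT ik]]].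
case/inZ => y [j [-> /and3P [_ yT jk]]].
by rewrite /Gc_adj meet0C.
Qed.

Local Notation Z := (Zstar k).
Local Notation A := (@Gc_adj n k).

Lemma walk_nil u : u \in Z -> gwalk Z A u [::] u.
Proof. by move=> uZ; split => //=; rewrite uZ. Qed.

Lemma walk_cons u v p w : u \in Z -> A u v -> gwalk Z A v p w -> gwalk Z A u (v :: p) w.
Proof. by move=> uZ uv [H1 H2 H3]; split => //=; rewrite ?uv ?H1 ?uZ. Qed.

Lemma walk_cat u p v q w : gwalk Z A u p v -> gwalk Z A v q w -> gwalk Z A u (p ++ q) w.
Proof.
move=> [H1 H2 H3] [G1 G2 G3]; split.
- by rewrite cat_path H1 H2.
- by rewrite last_cat H2.
- move: H3 G3 => /= /andP [-> H3] /andP [_ G3]; by rewrite all_cat H3 G3.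
Qed.

Lemma walk0 u w : gwalk Z A u [::] w -> u = w.
Proof. by case. Qed.

Lemma walk1 u d w : gwalk Z A u [:: d] w -> A u w.
Proof. by case=> /= /andP [H _] <-. Qed.

Lemma shortest_nil u : u \in Z -> gshortest Z A u [::] u.
Proof. by move=> uZ; split; [apply: walk_nil|]. Qed.

Lemma shortest1 u w : u \in Z -> w \in Z -> A u w -> gshortest Z A u [:: w] w.
Proof.
move=> uZ wZ uw; split; first by apply: walk_cons => //; apply: walk_nil.
case => [|d q] /=; last by [].
by move/walk0 => e; move: uw; rewrite e /Gc_adj eqxx.
Qed.

Lemma shortest2 u c w : u \in Z -> c \in Z -> w \in Z -> A u c -> A c w ->
  ~~ A u w -> u != w -> gshortest Z A u [:: c; w] w.
Proof.
move=> uZ cZ wZ uc cw nuw nuw'; split.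
  by apply: walk_cons => //; apply: walk_cons => //; apply: walk_nil.
case => [|d [|e q]] /=; last by [].
  by move/walk0 => e; rewrite e eqxx in nuw'.
by move/walk1 => H; rewrite H in nuw.
Qed.

Lemma two_proper (i j : 'I_n) : [set i; j] != setT.
Proof. by apply: small_proper; rewrite cards2; apply: leq_trans Hn; case: (i != j). Qed.

Lemma middle a b : a \in Z -> b \in Z -> a != b -> ~~ A a b ->
  exists c, [/\ c \in Z, A a c & A c b].
Proof.
move=> aZ bZ ab; rewrite Zadj // ab /= negbK => /eqP dis.
have /andP [/set0Pn [i ia] _] := Zsx aZ.
have /andP [/set0Pn [j jb] _] := Zsx bZ.
have z0 : [set i; j] != set0 by apply/set0Pn; exists i; rewrite !inE eqxx.
have cZ := v0Z z0 (two_proper i j).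
have jna : j \notin sx a.
  apply/negP => ja; have : j \in sx a :&: sx b by rewrite inE ja jb.
  by rewrite dis inE.
have inb : i \notin sx b.
  apply/negP => ib; have : i \in sx a :&: sx b by rewrite inE ia ib.
  by rewrite dis inE.
exists (v0 [set i; j]); split => //; rewrite Zadj // sx_v0.
- apply/andP; split.
    by apply: contraNneq jna => ->; rewrite sx_v0 !inE eqxx orbT.
  by apply/set0Pn; exists i; rewrite !inE ia eqxx.
- apply/andP; split.
    by apply: contraNneq inb => <-; rewrite sx_v0 !inE eqxx.
  by apply/set0Pn; exists j; rewrite !inE jb eqxx orbT.
Qed.

Lemma conn a b : a \in Z -> b \in Z -> exists q, gwalk Z A a q b /\ size q <= 2.
Proof.
move=> aZ bZ; have [<-|ab] := eqVneq a b; first by exists [::]; split => //; apply: walk_nil.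
have [adj|nadj] := boolP (A a b).
  by exists [:: b]; split => //; apply: walk_cons => //; apply: walk_nil.
have [c [cZ ac cb]] := middle aZ bZ ab nadj.
exists [:: c; b]; split => //.
by apply: walk_cons => //; apply: walk_cons => //; apply: walk_nil.
Qed.

Lemma sh_exists a b : a \in Z -> b \in Z -> exists p, gshortest Z A a p b.
Proof.
move=> aZ bZ; have [<-|ab] := eqVneq a b; first by exists [::]; apply: shortest_nil.
have [adj|nadj] := boolP (A a b); first by exists [:: b]; apply: shortest1.
have [c [cZ ac cb]] := middle aZ bZ ab nadj.
by exists [:: c; b]; apply: shortest2.
Qed.

Lemma bad u v w p : u \in Z -> v \in Z -> u != v ->
  (sx u = sx v \/ sx u :&: sx v = set0) ->
  gshortest Z A u p w -> v \in u :: p -> w = v.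
Proof.
move=> uZ vZ uv P [[H1 H2 H3] Hs] vin.
have vp : v \in p by rewrite inE eq_sym (negbTE uv) in vin.
case/splitPr: vp H1 H2 H3 Hs => p1 p2.
rewrite cat_path last_cat /= => /andP [P1 P2] L Al Hs.
case: p2 P2 L Al Hs => [|z p3] /=; first by move=> _ <-.
move=> /and3P [lv vz zp3] L /andP [_]; rewrite all_cat /= => /and3P [_ _ /andP [zZ Ap3]] Hs.
have Wz : gwalk Z A z p3 w by split => //=; rewrite zZ.
suff [q [Wq sq]] : exists q, gwalk Z A u q z /\ size q <= size p1 + 1.
  have := Hs _ (walk_cat Wq Wz); rewrite !size_cat /= => le.
  exfalso; move: le sq; clear; move: (size p1) (size p3) (size q) => a b c. lia.
case: P => [e|dis].
  have [<-|uz] := eqVneq u z; first by exists [::]; split => //; apply: walk_nil.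
  exists [:: z]; split; last by rewrite addn1.
  apply: walk_cons => //; last by apply: walk_nil.
  by move: vz; rewrite !Zadj // uz e => /andP [].
have [q [Wq sq]] := conn uZ zZ.
exists q; split => //.
case: p1 P1 lv {Hs L} => [|d p1] /=; last by move=> _ _; apply: leq_trans sq _; rewrite addn1.
by rewrite Zadj // dis eqxx andbF.
Qed.

Lemma card_sets : #|{set 'I_n}| = 2 ^ n.
Proof. by rewrite -cardsT -powersetT card_powerset cardsT card_ord. Qed.

Definition PP : {set {set 'I_n}} := ~: [set set0; setT].

Lemma set0T : (set0 : {set 'I_n}) != setT.
Proof.
apply/negP => /eqP /setP /(_ (Ordinal n0)); by rewrite !inE.
Qed.

Lemma cardPP : #|PP| = 2 ^ n - 2.
Proof.
have := cardsC [set (set0 : {set 'I_n}); setT].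
by rewrite cards2 set0T card_sets /PP => <-; rewrite addKn.
Qed.

Lemma inPP x : (x \in PP) = (x != set0) && (x != setT).
Proof. by rewrite !inE negb_or. Qed.

Lemma intersecting (F : {set {set 'I_n}}) : F \subset PP ->
  {in F &, forall x y, x :&: y != set0} -> #|F| * 2 + 2 <= 2 ^ n.
Proof.
move=> FP Fi.
pose G := (@setC _) @: F.
have cG : #|G| = #|F| by apply: card_imset; apply: setC_inj.
have FG : F :&: G = set0.
  apply/setP => x; rewrite !inE; apply/negP => /andP [xF /imsetP [y yF e]].
  by have := Fi _ _ xF yF; rewrite e setIC setICr eqxx.
have sub : F :|: G \subset PP.
  apply/subsetP => x; rewrite inE => /orP [/(subsetP FP) //|/imsetP [y yF ->]].
  move: (subsetP FP _ yF); rewrite !inPP => /andP [y0 yT].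
  apply/andP; split.
    by apply: contraNneq yT => e; rewrite -(setCK y) e setC0.
  by apply: contraNneq y0 => e; rewrite -(setCK y) e setCT.
have := subset_leq_card sub; rewrite cardsU FG cards0 subn0 cG cardPP.
have : 4 <= 2 ^ n by rewrite -[4]/(2 ^ 2) leq_exp2l //; apply: leq_trans Hn.
lia.
Qed.

Lemma half (i0 : 'I_n) : #|[set x : {set 'I_n} | i0 \in x]| * 2 = 2 ^ n.
Proof.
set F := [set x : {set 'I_n} | i0 \in x].
have e : (@setC _) @: F = ~: F.
  apply/setP => x; rewrite inE; apply/imsetP/idP.
    by case=> y; rewrite !inE => yi ->; rewrite inE negbK.
  by rewrite !inE => xi; exists (~: x); rewrite ?setCK // !inE.
have := cardsC F; rewrite -e card_imset; last exact: setC_inj.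
by rewrite card_sets => <-; rewrite muln2 addnn.
Qed.

Lemma single_ok (i : 'I_n) : v0 [set i] \in Z.
Proof.
apply: v0Z; first by apply/set0Pn; exists i; rewrite inE.
by apply: small_proper; rewrite cards1; apply: leq_trans Hn.
Qed.

Lemma resolve_S (i0 : 'I_n) (S : {set E}) x y i :
  x \in PP -> y \in PP -> i0 \in x -> i0 \in y -> i \in x -> i \notin y ->
  (forall j, v0 [set j] \in S -> i0 == j) ->
  exists2 w, w \in Z :\: S & exists p, gshortest Z A (v0 y) p w /\ v0 x \in v0 y :: p.
Proof.
rewrite !inPP => /andP [x0 xT] /andP [y0 yT] i0x i0y ix iy HS.
have xZ := v0Z x0 xT; have yZ := v0Z y0 yT; have wZ := single_ok i.
have i0i : i0 != i by apply: contraNneq iy => <-.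
exists (v0 [set i]).
  by rewrite inE wZ andbT; apply/negP => /HS; rewrite (negbTE i0i).
exists [:: v0 x; v0 [set i]]; split; last by rewrite !inE eqxx orbT.
apply: shortest2 => //.
- rewrite Zadj // !sx_v0; apply/andP; split.
    by apply: contraNneq iy => /v0_inj ->.
  by apply/set0Pn; exists i0; rewrite inE i0x i0y.
- rewrite Zadj // !sx_v0; apply/andP; split.
    by apply: contraNneq i0i => /v0_inj e; move: i0x; rewrite e inE.
  by apply/set0Pn; exists i; rewrite !inE ix eqxx.
- rewrite Zadj // !sx_v0 negb_and !negbK; apply/orP; right.
  apply/eqP; apply/setP => j; rewrite !inE; apply/negP => /andP [jy /eqP ji].
  by move: jy; rewrite ji (negbTE iy).
- by apply: contraNneq i0i => /v0_inj e; move: i0y; rewrite e inE eq_sym.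
Qed.

Lemma resolves_bad (W : {set E}) u v :
  strong_resolving_set Z A W -> u \in Z :\: W -> v \in Z :\: W -> u != v ->
  (sx u != sx v) && (sx u :&: sx v != set0).
Proof.
move=> [WZ Hres]; rewrite !in_setD => /andP [uW uZ] /andP [vW vZ] uv.
have [w wW [[p [sp vin]]|[p [sp uin]]]] := Hres u v uZ vZ uv.
- apply/negPn/negP => H; have e : w = v.
    apply: bad uZ vZ uv _ sp vin.
    by move: H; rewrite negb_and !negbK => /orP [/eqP|/eqP]; [left|right].
  by rewrite -e wW in vW.
- apply/negPn/negP => H; have e : w = u.
    apply: bad vZ uZ _ _ sp uin; first by rewrite eq_sym.
    by move: H; rewrite negb_and !negbK setIC => /orP [/eqP|/eqP]; [left|right].
  by rewrite -e wW in uW.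
Qed.

Lemma main_thm : is_sdim Z A (#|Z| - 2 ^ n.-1 + 1).
Proof.
have e2 : 2 ^ n = 2 * 2 ^ n.-1 by rewrite -expnS prednK // n0.
have big : 4 <= 2 ^ n.-1.
  by rewrite -[4]/(2 ^ 2) leq_exp2l //; rewrite -ltnS prednK ?n0.
have cZ : 2 ^ n - 2 <= #|Z|.
  rewrite -cardPP -(card_imset _ v0_inj); apply: subset_leq_card.
  apply/subsetP => a /imsetP [x]; rewrite inPP => /andP [x0 xT] ->.
  exact: v0Z.
split.
- pose i0 : 'I_n := Ordinal n0.
  pose F0 := [set x : {set 'I_n} | (i0 \in x) && (x != setT)].
  pose S := v0 @: F0.
  have SZ : S \subset Z.
    apply/subsetP => a /imsetP [x]; rewrite inE => /andP [i0x xT] ->.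
    by apply: v0Z => //; apply/set0Pn; exists i0.
  have cS : #|S| + 1 = #|[set x : {set 'I_n} | i0 \in x]|.
    rewrite (cardsD1 setT) inE in_setT /= (card_imset _ v0_inj) addnC; congr (_ + _).
    by apply: eq_card => x; rewrite !inE andbC.
  have hh := half i0.
  exists (Z :\: S); split.
    split; first exact: subsetDl.
    move=> u v uZ vZ uv.
    have [uW|uS] := boolP (u \in Z :\: S).
      exists u => //; right; have [p sp] := sh_exists vZ uZ.
      by exists p; split => //; case: sp => -[_ <- _] _; apply: mem_last.
    have [vW|vS] := boolP (v \in Z :\: S).
      exists v => //; left; have [p sp] := sh_exists uZ vZ.
      by exists p; split => //; case: sp => -[_ <- _] _; apply: mem_last.
    move: uS vS; rewrite !in_setD uZ vZ !andbT !negbK.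
    move=> /imsetP [x]; rewrite inE => /andP [i0x xT] eu.
    move=> /imsetP [y]; rewrite inE => /andP [i0y yT] ev.
    subst u v.
    have x0 : x != set0 by apply/set0Pn; exists i0.
    have y0 : y != set0 by apply/set0Pn; exists i0.
    have HS j : v0 [set j] \in S -> i0 == j.
      by case/imsetP => z; rewrite inE => /andP [i0z _] /v0_inj e; move: i0z; rewrite -e inE.
    have xP : x \in PP by rewrite inPP x0.
    have yP : y \in PP by rewrite inPP y0.
    have [sxy|nsxy] := boolP (x \subset y).
      have : ~~ (y \subset x).
        by apply: contraNN uv => syx; apply/eqP; congr v0; apply/eqP; rewrite eqEsubset sxy.
      case/subsetPn => i iy ix.
      have [w wW [p [sp uin]]] := resolve_S yP xP i0y i0x iy ix HS.
      by exists w => //; left; exists p.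
    case/subsetPn: nsxy => i ix iy.
    have [w wW [p [sp uin]]] := resolve_S xP yP i0x i0y ix iy HS.
    by exists w => //; right; exists p.
  rewrite cardsD (setIidPr SZ).
  have := subset_leq_card SZ. lia.
- move=> W sW; have [WZ _] := sW.
  pose I := Z :\: W.
  have inj : {in I &, injective sx}.
    move=> u v uI vI e; apply/eqP; apply/negPn/negP => /(resolves_bad sW uI vI).
    by rewrite e eqxx.
  have FP : sx @: I \subset PP.
    apply/subsetP => x /imsetP [u]; rewrite inE => /andP [_ uZ] ->.
    by rewrite inPP Zsx.
  have := intersecting FP.
  rewrite card_in_imset // => H.
  have {}H : #|I| * 2 + 2 <= 2 ^ n.
    apply: H => x y /imsetP [u uI ->] /imsetP [v vI ->].
    have [<-|uv] := eqVneq u v.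
      by rewrite setIid; move: uI; rewrite inE => /andP [_ /Zsx /andP []].
    by have /andP [] := resolves_bad sW uI vI uv.
  have cI : #|I| = #|Z| - #|W| by rewrite /I cardsD (setIidPr WZ).
  have := subset_leq_card WZ. lia.
Qed.
End S.

Theorem theorem3p20 (n : nat) (k : {set 'I_n} -> nat) :
  3 <= n ->
  (forall x : {set 'I_n}, x != set0 -> x != setT -> 0 < k x) ->
  is_sdim (Zstar k) (@Gc_adj n k) (#|Zstar k| - 2 ^ n.-1 + 1).
Proof. by move=> Hn Hk; apply: main_thm. Qed.
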